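(* Let $M$ be a left $\bar k[t,\sigma]$-module finitely generated both over $\bar k[\sigma]$ and over $\bar k[t]$. Let $M_\sigma$ (resp. $M_t$) be the sum of all $\bar k[\sigma]$-submodules (resp. $\bar k[t]$-submodules) $N\subset M$ with $\dim_{\bar k}N<\infty$. Then $M_\sigma=M_t$, $\dim_{\bar k}M_\sigma<\infty$, and $M/M_\sigma$ is free of finite rank both over $\bar k[\sigma]$ and over $\bar k[t]$.
   Context: $\bar k$ is the algebraic closure of $k=\mathbb F_q(T)$ and $t$ a variable. $\bar k[\sigma]$ is the noncommutative polynomial ring with $\sigma x=x^{q^{-1}}\sigma$ ($x\in\bar k$); $\bar k[t,\sigma]$ is obtained by adjoining to $\bar k[\sigma]$ a variable $t$ commuting with $\sigma$ and with $\bar k$. *)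

(* Defs.v *)
From HB Require Import structures.
From mathcomp Require Import all_boot all_order all_algebra all_field.
From mathcomp Require Import fraction.
Set Implicit Arguments. Unset Strict Implicit. Unset Printing Implicit Defensive.
Import Order.TTheory GRing.Theory.
Local Open Scope ring_scope.

(* A left kbar[t,sigma]-module is encoded as a kbar-vector space M together
   with an additive, sigma-semilinear map sM (action of sigma) and a
   kbar-linear map tM (action of t) commuting with sM. *)

Section Defs.
Variables (K : fieldType) (M : lmodType K).

Definition kspan (s : seq M) (m : M) : Prop :=
  exists c : nat -> K, m = \sum_(i < size s) c i *: s`_i.

Definition fd_stable (f : M -> M) (N : M -> Prop) : Prop :=
  [/\ N 0, (forall x y, N x -> N y -> N (x + y)),
      (forall (a : K) x, N x -> N (a *: x)),
      (forall x, N x -> N (f x)) &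
      exists s : seq M, forall m, N m <-> kspan s m].

Definition tors_part (f : M -> M) (m : M) : Prop :=
  exists (n : nat) (Ns : nat -> M -> Prop) (xs : nat -> M),
    (forall i, (i < n)%N -> fd_stable f (Ns i) /\ Ns i (xs i)) /\
    m = \sum_(i < n) xs i.

Definition skew_act (f : M -> M) (c : nat -> K) (d : nat) (m : M) : M :=
  \sum_(j < d) c j *: iter j f m.

Definition fin_gen (f : M -> M) : Prop :=
  exists gens : seq M, forall m, exists (d : nat) (c : nat -> nat -> K),
    m = \sum_(i < size gens) skew_act f (c i) d gens`_i.

(* M / P is a free kbar[f]-module of finite rank (P a submodule):
   there are e_1..e_r in M whose images form a kbar[f]-basis of M/P. *)
Definition free_fin_rank_quot (f : M -> M) (P : M -> Prop) : Prop :=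
  exists e : seq M,
    (forall m, exists (d : nat) (c : nat -> nat -> K),
        P (m - \sum_(i < size e) skew_act f (c i) d e`_i)) /\
    (forall (d : nat) (c : nat -> nat -> K),
        P (\sum_(i < size e) skew_act f (c i) d e`_i) ->
        forall i j, (i < size e)%N -> (j < d)%N -> c i j = 0).

End Defs.

(* Main.v *)
Require Import Defs.
From HB Require Import structures.
From mathcomp Require Import all_boot all_order all_algebra all_field.
From mathcomp Require Import fraction zify.
From Stdlib Require Import Classical IndefiniteDescription.
Set Implicit Arguments. Unset Strict Implicit. Unset Printing Implicit Defensive.
Import Order.TTheory GRing.Theory.
Local Open Scope ring_scope.

Section Kspan.
Variables (K : fieldType) (M : lmodType K).
Implicit Types (s t : seq M) (m x y : M).

Lemma kspan0 s : kspan s 0.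
Proof. by exists (fun _ => 0); rewrite big1 // => i _; rewrite scale0r. Qed.

Lemma kspanD s x y : kspan s x -> kspan s y -> kspan s (x + y).
Proof.
move=> [c1 ->] [c2 ->]; exists (fun i => c1 i + c2 i).
by rewrite -big_split; apply: eq_bigr => i _; rewrite scalerDl.
Qed.

Lemma kspanZ s a x : kspan s x -> kspan s (a *: x).
Proof.
move=> [c ->]; exists (fun i => a * c i).
by rewrite scaler_sumr; apply: eq_bigr => i _; rewrite scalerA.
Qed.

Lemma kspanN s x : kspan s x -> kspan s (- x).
Proof. by move=> H; rewrite -scaleN1r; apply: kspanZ. Qed.

Lemma kspanB s x y : kspan s x -> kspan s y -> kspan s (x - y).
Proof. by move=> Hx Hy; apply: kspanD => //; apply: kspanN. Qed.

Lemma kspan_sum s n (F : nat -> M) :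
  (forall i, (i < n)%N -> kspan s (F i)) -> kspan s (\sum_(i < n) F i).
Proof.
move=> H; apply: (big_ind (kspan s)); [exact: kspan0| exact: kspanD|].
by move=> i _; apply: H.
Qed.

Lemma kspan_nth s i : (i < size s)%N -> kspan s s`_i.
Proof.
move=> Hi; exists (fun j => (j == i)%:R).
rewrite (bigD1 (Ordinal Hi)) //= eqxx scale1r big1 ?addr0 // => j Hj.
have -> : (nat_of_ord j == i) = false.
  by apply/negbTE; apply: contra Hj => /eqP Hji; apply/eqP/val_inj.
by rewrite scale0r.
Qed.

Lemma kspan_sub s t m :
  (forall i, (i < size s)%N -> kspan t s`_i) -> kspan s m -> kspan t m.
Proof.
move=> H [c ->]; apply: (kspan_sum (F := fun i => c i *: s`_i)) => i Hi.
apply: kspanZ; exact: H.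
Qed.

Lemma kspan_catl s t m : kspan s m -> kspan (s ++ t) m.
Proof.
apply: kspan_sub => i Hi; have -> : s`_i = (s ++ t)`_i by rewrite nth_cat Hi.
apply: kspan_nth.
by rewrite size_cat ltn_addr.
Qed.

Lemma kspan_nil m : kspan [::] m -> m = 0.
Proof. by move=> [c ->]; rewrite big_ord0. Qed.

Lemma kspan_dep t (x : nat -> M) : (forall j, kspan t (x j)) ->
  exists A : {poly K}, A != 0 /\ (size A <= (size t).+1)%N /\
    \sum_(j < (size t).+1) A`_j *: x j = 0.
Proof.
move=> H.
pose c j := proj1_sig (constructive_indefinite_description _ (H j)).
have Hc j : x j = \sum_(i < size t) c j i *: t`_i.
  exact: (proj2_sig (constructive_indefinite_description _ (H j))).
set n := size t.
pose C : 'M[K]_(n.+1, n) := \matrix_(j, i) c j i.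
have rk : (0 < \rank (kermx C))%N.
  by rewrite mxrank_ker subn_gt0 ltnS rank_leq_col.
have Kn0 : kermx C != 0 by rewrite -mxrank_eq0 -lt0n.
have [i [j Hij]] : exists i j, kermx C i j != 0.
  apply: NNPP => Hn; move/negP: Kn0; apply; apply/eqP/matrixP => i j.
  rewrite [RHS]mxE; apply: NNPP => Hne; apply: Hn; exists i, j.
  by apply/negP => /eqP.
pose v := row i (kermx C).
have vC : v *m C = 0 by rewrite /v -row_mul mulmx_ker row0.
exists (\poly_(k < n.+1) v 0 (inord k)); split; last split.
- apply/eqP => /(congr1 (fun p : {poly K} => p`_j)).
  by rewrite coef_poly ltn_ord coef0 inord_val mxE => /eqP; rewrite (negbTE Hij).
- exact: size_poly.
- transitivity (\sum_(k < n.+1) v 0 k *: x k).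
    by apply: eq_bigr => k _; rewrite coef_poly ltn_ord inord_val.
  under eq_bigr => k _ do rewrite Hc scaler_sumr.
  rewrite exchange_big /= big1 // => l _.
  rewrite (eq_bigr (fun k => (v 0 k * C k l) *: t`_l)); last first.
    by move=> k _; rewrite scalerA [C _ _]mxE.
  rewrite -scaler_suml.
  have -> : \sum_(k < n.+1) v 0 k * C k l = (v *m C) 0 l by rewrite mxE.
  by rewrite vC mxE scale0r.
Qed.

End Kspan.
Section Gen.
Variables (K : fieldType) (M : lmodType K) (f : M -> M) (th : K -> K).
Hypothesis f_add : forall x y, f (x + y) = f x + f y.
Hypothesis f_semi : forall a m, f (a *: m) = th a *: f m.
Hypothesis th0 : th 0 = 0.
Hypothesis thnz : forall a, th a = 0 -> a = 0.
Hypothesis thsurj : forall y, exists x, th x = y.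
Implicit Types (p q c d A : {poly K}) (m w : M).

Lemma f0 : f 0 = 0.
Proof.
have H := f_add 0 0; rewrite addr0 in H.
by apply: (@addrI _ (f 0)); rewrite addr0 -H.
Qed.

Lemma iterf_add j x y : iter j f (x + y) = iter j f x + iter j f y.
Proof. by elim: j => //= j ->; rewrite f_add. Qed.

Lemma iterf0 j : iter j f 0 = 0.
Proof. by elim: j => //= j ->; rewrite f0. Qed.

Lemma iterf_sum j n (F : 'I_n -> M) :
  iter j f (\sum_(i < n) F i) = \sum_(i < n) iter j f (F i).
Proof. exact: (big_morph (iter j f) (iterf_add j) (iterf0 j)). Qed.

Lemma f_sum n (F : 'I_n -> M) : f (\sum_(i < n) F i) = \sum_(i < n) f (F i).
Proof. exact: (big_morph f f_add f0). Qed.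

Lemma f_opp x : f (- x) = - f x.
Proof.
by apply/eqP; rewrite -addr_eq0 -f_add addrC subrr f0.
Qed.

Lemma f_sub x y : f (x - y) = f x - f y.
Proof. by rewrite f_add f_opp. Qed.

Lemma iterf_scale j a x : iter j f (a *: x) = iter j th a *: iter j f x.
Proof. by elim: j => //= j ->; rewrite f_semi. Qed.

Lemma iterth0 j : iter j th 0 = 0.
Proof. by elim: j => //= j ->. Qed.

Lemma iterth_nz j a : iter j th a = 0 -> a = 0.
Proof. by elim: j a => //= j IH a /thnz /IH. Qed.

Lemma iterth_surj j y : exists x, iter j th x = y.
Proof.
elim: j y => [|j IH] y; first by exists y.
have [z <-] := thsurj y; have [x <-] := IH z; by exists x.
Qed.

Definition stab (s : seq M) := forall m, kspan s m -> kspan s (f m).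

Lemma stab_gens s : (forall i, (i < size s)%N -> kspan s (f s`_i)) -> stab s.
Proof.
move=> H m [c ->]; rewrite f_sum.
apply: (kspan_sum (F := fun i => f (c i *: s`_i))) => i Hi.
rewrite f_semi; apply: kspanZ; exact: H.
Qed.

Lemma stab_iter s j m : stab s -> kspan s m -> kspan s (iter j f m).
Proof. by move=> Hs; elim: j => //= j IH /IH /Hs. Qed.

Definition act (p : {poly K}) (m : M) := \sum_(j < size p) p`_j *: iter j f m.

Lemma act_widen n p m : (size p <= n)%N ->
  act p m = \sum_(j < n) p`_j *: iter j f m.
Proof.
move=> H; rewrite /act (big_ord_widen n (fun j => p`_j *: iter j f m) H).
rewrite big_mkcond /=; apply: eq_bigr => i _.
by case: ltnP => // Hi; rewrite nth_default // scale0r.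
Qed.

Lemma act0p m : act 0 m = 0.
Proof. by rewrite /act size_poly0 big_ord0. Qed.

Lemma act_add p q m : act (p + q) m = act p m + act q m.
Proof.
pose n := maxn (size p) (size q).
rewrite !(act_widen (n:=n)) ?leq_maxl ?leq_maxr ?size_polyD //.
by rewrite -big_split; apply: eq_bigr => i _; rewrite coefD scalerDl.
Qed.

Lemma act_scale a p m : act (a *: p) m = a *: act p m.
Proof.
rewrite !(act_widen (n:=(size p))) ?size_scale_leq // scaler_sumr.
by apply: eq_bigr => i _; rewrite coefZ scalerA.
Qed.

Lemma act_opp p m : act (- p) m = - act p m.
Proof. by rewrite -(scaleN1r p) act_scale scaleN1r. Qed.

Lemma act_sub p q m : act (p - q) m = act p m - act q m.
Proof. by rewrite act_add act_opp. Qed.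

Lemma act_sum n (P : 'I_n -> {poly K}) m :
  act (\sum_(i < n) P i) m = \sum_(i < n) act (P i) m.
Proof.
exact: (big_morph (fun p => act p m) (fun p q => act_add p q m) (act0p m)).
Qed.

Lemma actp0 p : act p 0 = 0.
Proof. by rewrite /act big1 // => i _; rewrite iterf0 scaler0. Qed.

Lemma act_madd p x y : act p (x + y) = act p x + act p y.
Proof.
by rewrite /act -big_split; apply: eq_bigr => i _; rewrite iterf_add scalerDr.
Qed.

Lemma act_msum p n (F : 'I_n -> M) :
  act p (\sum_(i < n) F i) = \sum_(i < n) act p (F i).
Proof. exact: (big_morph (act p) (act_madd p) (actp0 p)). Qed.

Lemma act_mopp p x : act p (- x) = - act p x.
Proof.
by apply/eqP; rewrite -addr_eq0 -act_madd addrC subrr actp0.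
Qed.

Lemma act_msub p x y : act p (x - y) = act p x - act p y.
Proof. by rewrite act_madd act_mopp. Qed.

Lemma act_span s p w : stab s -> kspan s w -> kspan s (act p w).
Proof.
move=> Hs Hw; apply: (kspan_sum (F := fun j => p`_j *: iter j f w)) => j _.
by apply: kspanZ; apply: stab_iter.
Qed.

Lemma act_X a e m : act (a *: 'X^e) m = a *: iter e f m.
Proof.
rewrite (act_widen (n:=e.+1)); last by rewrite (leq_trans (size_scale_leq _ _)) // size_polyXn.
rewrite big_ord_recr /= big1 ?add0r; first by rewrite coefZ coefXn eqxx mulr1.
by move=> i _; rewrite coefZ coefXn (ltn_eqF (ltn_ord i)) mulr0 scale0r.
Qed.

Lemma act1 m : act 1 m = m.
Proof. by rewrite -(scale1r 1) -(expr0 'X) act_X scale1r. Qed.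

Lemma act_poly (d : nat) (c : nat -> K) m : act (\poly_(j < d) c j) m = skew_act f c d m.
Proof.
rewrite (act_widen (n:=d)) ?size_poly //; apply: eq_bigr => j _.
by rewrite coef_poly ltn_ord.
Qed.

Definition shiftL j (c : {poly K}) : {poly K} :=
  \poly_(n < size c + j) (if (j <= n)%N then iter j th c`_(n - j) else 0).

Lemma coef_shiftL j c n :
  (shiftL j c)`_n = if (j <= n)%N then iter j th c`_(n - j) else 0.
Proof.
rewrite coef_poly; case: ltnP => // H; case: ifP => // Hj.
by rewrite nth_default ?iterth0 // leq_subRL // addnC.
Qed.

Lemma act_shiftL j c m : act (shiftL j c) m = iter j f (act c m).
Proof.
rewrite (act_widen (n:=(j + size c))); last by rewrite addnC size_poly.
rewrite big_split_ord /= big1 ?add0r; last first.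
  by move=> i _; rewrite coef_shiftL leqNgt ltn_ord /= scale0r.
rewrite /act iterf_sum; apply: eq_bigr => i _.
by rewrite coef_shiftL leq_addr addKn iterf_scale iterD.
Qed.

Definition smul (A c : {poly K}) : {poly K} :=
  \sum_(j < size A) A`_j *: shiftL j c.

Lemma act_comp A c m : act (smul A c) m = act A (act c m).
Proof.
rewrite act_sum [in RHS]/act; apply: eq_bigr => j _.
by rewrite act_scale act_shiftL.
Qed.

Lemma smul_widen n A c : (size A <= n)%N ->
  smul A c = \sum_(j < n) A`_j *: shiftL j c.
Proof.
move=> H; rewrite /smul (big_ord_widen n (fun j => A`_j *: shiftL j c) H).
rewrite big_mkcond /=; apply: eq_bigr => i _.
by case: ltnP => // Hi; rewrite nth_default // scale0r.
Qed.

Lemma smul_size A c a b : (size A <= a.+1)%N -> (size c <= b.+1)%N ->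
  (size (smul A c) <= (a + b).+1)%N.
Proof.
move=> HA Hc; apply/leq_sizeP => n Hn; rewrite (smul_widen c HA) coef_sum.
apply: big1 => j _; rewrite coefZ coef_shiftL; case: ifP => Hj; last by rewrite mulr0.
have Hs : (size c <= n - j)%N by move: (ltn_ord j) => Hj'; lia.
by rewrite (nth_default 0 Hs) iterth0 mulr0.
Qed.

Lemma smul_top A c a b : (size A <= a.+1)%N -> (size c <= b.+1)%N ->
  (smul A c)`_(a + b) = A`_a * iter a th c`_b.
Proof.
move=> HA Hc; rewrite (smul_widen c HA) coef_sum big_ord_recr /=.
rewrite big1 ?add0r; first by rewrite coefZ coef_shiftL leq_addr addKn.
move=> j _; rewrite coefZ coef_shiftL.
have Hj : (j <= a + b)%N by rewrite (leq_trans (ltnW (ltn_ord j))) ?leq_addr.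
have Hs : (size c <= a + b - j)%N by move: (ltn_ord j) => Hj'; lia.
by rewrite Hj (nth_default 0 Hs) iterth0 mulr0.
Qed.

Lemma smul_neq0 A c : A != 0 -> c != 0 -> smul A c != 0.
Proof.
move=> HA Hc; apply/eqP => /(congr1 (fun p : {poly K} => p`_((size A).-1 + (size c).-1))).
rewrite smul_top ?leqSpred // coef0 => /eqP; rewrite mulf_eq0 => /orP [].
  by rewrite -lead_coefE lead_coef_eq0 (negbTE HA).
by move/eqP => /iterth_nz /eqP; rewrite -lead_coefE lead_coef_eq0 (negbTE Hc).
Qed.

Lemma size_le_pred (q : {poly K}) n : (size q <= n.+1)%N -> q`_n = 0 -> (size q <= n)%N.
Proof.
move=> H1 H2; apply/leq_sizeP => j Hj.
case: (ltngtP j n) => [Hlt|Hgt|->] //; first by rewrite leqNgt Hlt in Hj.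
exact: (leq_sizeP _ _ H1).
Qed.

Lemma skew_div p d : d != 0 -> exists q (r : {poly K}), (size r < size d)%N /\
  forall m, act p m = act d (act q m) + act r m.
Proof.
move=> Hd; move: {2}(size p) (leqnn (size p)) => n.
elim: n p => [|n IH] p Hp.
  exists 0, p; split; last by move=> m; rewrite act0p actp0 add0r.
  by move: Hp; rewrite leqn0 => /eqP ->; rewrite size_poly_gt0.
case: (ltnP (size p) (size d)) => Hpd.
  by exists 0, p; split => // m; rewrite act0p actp0 add0r.
have sd0 : (0 < size d)%N by rewrite size_poly_gt0.
set a := (size d).-1; set e := (size p - size d)%N.
have Hsp : size p = (a + e).+1.
  by rewrite /a /e -addSn prednK // subnKC.
have [rho Hrho] := iterth_surj a (lead_coef p / lead_coef d).
pose P2 := smul d (rho *: 'X^e).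
have HX : (size (rho *: 'X^e) <= e.+1)%N.
  by rewrite (leq_trans (size_scale_leq _ _)) // size_polyXn.
have Ha : (size d <= a.+1)%N by rewrite /a prednK.
have sP2 : (size P2 <= (a + e).+1)%N by apply: smul_size.
have tP2 : P2`_(a + e) = lead_coef p.
  rewrite /P2 smul_top // coefZ coefXn eqxx mulr1 Hrho.
  by rewrite -lead_coefE mulrC divfK // lead_coef_eq0.
pose p' := p - P2.
have sp' : (size p' <= n)%N.
  have : (size p' <= a + e)%N.
    apply: size_le_pred.
      by rewrite /p' (leq_trans (size_polyD _ _)) // geq_max size_polyN sP2 -Hsp leqnn.
    by rewrite /p' coefD coefN tP2 lead_coefE Hsp subrr.
  by move/leq_trans; apply; rewrite -ltnS -Hsp.
have [q' [r [Hr Hq']]] := IH p' sp'.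
exists (q' + rho *: 'X^e), r; split => // m.
have -> : p = p' + P2 by rewrite /p' subrK.
rewrite act_add Hq' /P2 act_comp act_add act_madd.
by rewrite addrAC.
Qed.

Inductive gen (g s : seq M) : M -> Prop :=
 | gen_s (m : M) : kspan s m -> gen g s m
 | gen_g (x : M) : x \in g -> gen g s x
 | gen_add (x y : M) : gen g s x -> gen g s y -> gen g s (x + y)
 | gen_scale (a : K) (x : M) : gen g s x -> gen g s (a *: x)
 | gen_f (x : M) : gen g s x -> gen g s (f x).

Lemma gen0 g s : gen g s 0.
Proof. exact/gen_s/kspan0. Qed.

Lemma gen_sum g s n (F : nat -> M) :
  (forall i, (i < n)%N -> gen g s (F i)) -> gen g s (\sum_(i < n) F i).
Proof.
move=> H; apply: (big_ind (gen g s)); [exact: gen0| exact: gen_add|].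
by move=> i _; apply: H.
Qed.

Lemma gen_iter g s j (x : M) : gen g s x -> gen g s (iter j f x).
Proof. by elim: j => //= j IH /IH /gen_f. Qed.

Lemma gen_act g s p (x : M) : gen g s x -> gen g s (act p x).
Proof.
move=> H; apply: (gen_sum (F := fun j => p`_j *: iter j f x)) => j _.
by apply: gen_scale; apply: gen_iter.
Qed.

Lemma gen_sub g s (x y : M) : gen g s x -> gen g s y -> gen g s (x - y).
Proof. by move=> Hx Hy; apply: gen_add => //; rewrite -scaleN1r; apply: gen_scale. Qed.

Lemma gen_poly g s : stab s -> forall m, gen g s m ->
  exists c : nat -> {poly K}, kspan s (m - \sum_(i < size g) act (c i) g`_i).
Proof.
move=> Hs m; elim => {m}.
- move=> m Hm; exists (fun _ => 0); rewrite big1 ?subr0 // => i _; exact: act0p.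
- move=> x Hx; exists (fun i => if i == index x g then 1 else 0).
  have Hix : (index x g < size g)%N by rewrite index_mem.
  rewrite (bigD1 (Ordinal Hix)) //= eqxx act1 nth_index // big1 ?addr0 ?subrr;
    first exact: kspan0.
  move=> j Hj; have -> : (nat_of_ord j == index x g) = false.
    by apply/negbTE; apply: contra Hj => /eqP Hji; apply/eqP/val_inj.
  exact: act0p.
- move=> x y _ [c1 H1] _ [c2 H2]; exists (fun i => c1 i + c2 i).
  under eq_bigr => i _ do rewrite act_add.
  by rewrite big_split opprD addrACA; apply: kspanD.
- move=> a x _ [c H]; exists (fun i => a *: c i).
  under eq_bigr => i _ do rewrite act_scale.
  by rewrite -scaler_sumr -scalerBr; apply: kspanZ.
- move=> x _ [c H]; exists (fun i => shiftL 1 (c i)).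
  under eq_bigr => i _ do rewrite act_shiftL /=.
  by rewrite -f_sum -f_sub; apply: Hs.
Qed.

Definition Full (g s : seq M) := forall m, gen g s m.
Definition Rel (g s : seq M) (c : nat -> {poly K}) :=
  kspan s (\sum_(i < size g) act (c i) g`_i).
Definition Indep (g s : seq M) :=
  forall c : nat -> {poly K}, Rel g s c -> forall i, (i < size g)%N -> c i = 0.

Lemma tors_in g s A (x : M) : stab s -> Full g s -> Indep g s -> A != 0 ->
  kspan s (act A x) -> kspan s x.
Proof.
move=> Hs Hf Hi HA Hx; have [c Hc] := gen_poly Hs (Hf x).
set S := \sum_(i < size g) act (c i) g`_i in Hc.
have HS : kspan s (act A S).
  have -> : S = x - (x - S) by rewrite opprB addrCA subrr addr0.
  by rewrite act_msub; apply: kspanB => //; apply: act_span.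
have HR : Rel g s (fun i => smul A (c i)).
  rewrite /Rel; under eq_bigr => i _ do rewrite act_comp.
  by rewrite -act_msum.
have Hc0 : forall i, (i < size g)%N -> c i = 0.
  move=> i Hi'; have := Hi _ HR i Hi'; apply: contra_eq => Hci.
  exact: smul_neq0.
have S0 : S = 0 by rewrite /S big1 // => i _; rewrite Hc0 // act0p.
by move: Hc; rewrite S0 subr0.
Qed.

Lemma mem_rem_neq (T : eqType) (x y : T) (s : seq T) :
  y \in s -> y != x -> y \in rem x s.
Proof.
elim: s => // z s IH; rewrite inE /= => /orP [/eqP ->|Hy] Hne.
  by rewrite (negbTE Hne) mem_head.
by case: ifP => _ //; rewrite inE IH ?orbT.
Qed.

Lemma kill g s (c0 : {poly K}) k : stab s -> Full g s -> (k < size g)%N ->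
  c0 != 0 -> kspan s (act c0 g`_k) ->
  exists g' s', (size g' < size g)%N /\ stab s' /\ Full g' s'.
Proof.
move=> Hs Hf Hk Hc0 Hrel.
set x := g`_k; set top := (size c0).-1.
set s' := s ++ mkseq (fun j => iter j f x) top.
have Hss : forall m, kspan s m -> kspan s' m by move=> m; apply: kspan_catl.
have Hlow : forall j, (j < top)%N -> kspan s' (iter j f x).
  move=> j Hj; have -> : iter j f x = s'`_(size s + j).
    by rewrite nth_cat ltnNge leq_addr /= addKn nth_mkseq.
  by apply: kspan_nth; rewrite size_cat size_mkseq ltn_add2l.
have Htop : kspan s' (iter top f x).
  have sz : size c0 = top.+1 by rewrite /top prednK // size_poly_gt0.
  have E : act c0 x = \sum_(j < top) c0`_j *: iter j f x + c0`_top *: iter top f x.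
    by rewrite /act sz big_ord_recr.
  have lc : c0`_top != 0 by rewrite /top -lead_coefE lead_coef_eq0.
  have -> : iter top f x = (c0`_top)^-1 *: (act c0 x - \sum_(j < top) c0`_j *: iter j f x).
    by rewrite E addrC addKr scalerA mulVf // scale1r.
  apply: kspanZ; apply: kspanB; first exact: Hss.
  apply: (kspan_sum (F := fun j => c0`_j *: iter j f x)) => j Hj.
  by apply: kspanZ; apply: Hlow.
have Hle : forall j, (j <= top)%N -> kspan s' (iter j f x).
  by move=> j; rewrite leq_eqVlt => /orP [/eqP -> // | ]; apply: Hlow.
have Hs' : stab s'.
  apply: stab_gens => i; rewrite size_cat size_mkseq nth_cat => Hi.
  case: ltnP => Hi2; first by apply: Hss; apply: Hs; apply: kspan_nth.
  rewrite nth_mkseq; last by rewrite ltn_subLR.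
  by apply: (Hle (i - size s).+1); rewrite ltn_subLR.
exists (rem x g), s'; split; [|split] => //.
  by rewrite size_rem ?mem_nth // ltn_predL (leq_ltn_trans (leq0n k) Hk).
move=> m; elim: (Hf m) => {m} [m Hm|y Hy|y z _ Hy _ Hz|a y _ Hy|y _ Hy].
- exact/gen_s/Hss.
- case: (eqVneq y x) => [->|Hne]; first exact/gen_s/(Hle 0).
  by apply: gen_g; apply: mem_rem_neq.
- exact: gen_add.
- exact: gen_scale.
- exact: gen_f.
Qed.

Lemma sum2 n (F G : nat -> M) i k : (i < n)%N -> (k < n)%N -> i != k ->
  (forall j, (j < n)%N -> j != i -> j != k -> F j = G j) ->
  F i + F k = G i + G k -> \sum_(j < n) F j = \sum_(j < n) G j.
Proof.
move=> Hi Hk Hik H E.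
have Hki : Ordinal Hk != Ordinal Hi.
  by apply: contra Hik => /eqP [->].
have split2 : forall H0 : nat -> M, \sum_(j < n) H0 j =
    H0 i + H0 k + \sum_(j < n | (j != Ordinal Hi) && (j != Ordinal Hk)) H0 j.
  by move=> H0; rewrite (bigD1 (Ordinal Hi)) //= (bigD1 (Ordinal Hk)) //= addrA.
rewrite (split2 F) (split2 G) E; congr (_ + _); apply: eq_bigr => j /andP [Hj1 Hj2].
apply: H => //.
all: by [apply: contra Hj1 => /eqP Hj; apply/eqP/val_inj
        | apply: contra Hj2 => /eqP Hj; apply/eqP/val_inj].
Qed.

Definition nzc (g : seq M) (c : nat -> {poly K}) (k : nat) : nat :=
  \sum_(i < size g) (((nat_of_ord i != k) && (c i != 0%R)) : nat).

Lemma step (d : nat) : forall (N : nat) g s (c : nat -> {poly K}) (k : nat), size (c k) = d -> nzc g c k = N ->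
  stab s -> Full g s -> Rel g s c -> (k < size g)%N -> c k != 0 ->
  exists g' s', (size g' < size g)%N /\ stab s' /\ Full g' s'.
Proof.
elim/ltn_ind: d => d IHd N; elim/ltn_ind: N => N IHN g s c k Hd HN Hs Hf Hr Hk Hck.
case: (classic (exists i, (i < size g)%N /\ i != k /\ c i != 0))
  => [[i [Hi [Hik Hci]]]|Hno]; last first.
  apply: (kill Hs Hf Hk Hck).
  move: Hr; rewrite /Rel (bigD1 (Ordinal Hk)) //= big1 ?addr0; first by [].
  move=> j Hj.
  have Hcj : c j = 0.
    apply/eqP; apply: contraT => Hne; exfalso; apply: Hno; exists j.
    split; first exact: ltn_ord.
    split; last exact: Hne.
    by apply: contra Hj => /eqP Hjk; apply/eqP/val_inj.
  by rewrite Hcj act0p.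
have [q [r [Hrs Hdiv]]] := skew_div (c i) Hck.
pose g1 := set_nth 0 g k (g`_k + act q g`_i).
pose c1 := fun j => if j == i then r else c j.
have sz1 : size g1 = size g by rewrite size_set_nth; apply/maxn_idPr.
have g1E : forall j, g1`_j = if j == k then g`_k + act q g`_i else g`_j.
  by move=> j; rewrite nth_set_nth.
have Hr1 : Rel g1 s c1.
  rewrite /Rel sz1.
  suff -> : \sum_(j < size g) act (c1 j) g1`_j = \sum_(j < size g) act (c j) g`_j by [].
  apply: (sum2 (F := fun j => act (c1 j) g1`_j) (G := fun j => act (c j) g`_j) Hi Hk Hik).
    by move=> j _ Hji Hjk; rewrite /c1 g1E (negbTE Hji) (negbTE Hjk).
  rewrite /c1 !g1E !eqxx (negbTE Hik) eq_sym (negbTE Hik) Hdiv act_madd.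
  by rewrite [LHS]addrCA [LHS]addrC; congr (_ + _); rewrite addrC.
have Hf1 : Full g1 s.
  move=> m; elim: (Hf m) => {m} [m Hm|y Hy|y z _ Hy _ Hz|a y _ Hy|y _ Hy].
  - exact: gen_s.
  - rewrite -(nth_index 0 Hy); set j := index y g.
    have Hj : (j < size g)%N by rewrite index_mem.
    case: (eqVneq j k) => [->|Hjk].
      have -> : g`_k = g1`_k - act q g1`_i.
        by rewrite !g1E eqxx (negbTE Hik) addrK.
      apply: gen_sub; first by apply: gen_g; apply: mem_nth; rewrite sz1.
      by apply: gen_act; apply: gen_g; apply: mem_nth; rewrite sz1.
    have -> : g`_j = g1`_j by rewrite g1E (negbTE Hjk).
    by apply: gen_g; apply: mem_nth; rewrite sz1.
  - exact: gen_add.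
  - exact: gen_scale.
  - exact: gen_f.
have c1k : c1 k = c k by rewrite /c1 eq_sym (negbTE Hik).
have c1i : c1 i = r by rewrite /c1 eqxx.
case: (eqVneq r 0) => Hr0.
  have Hlt : (nzc g1 c1 k < N)%N.
    rewrite -HN /nzc sz1 (bigD1 (Ordinal Hi)) //= [X in (_ < X)%N](bigD1 (Ordinal Hi)) //=.
    have E : \sum_(j < size g | j != Ordinal Hi) (((nat_of_ord j != k) && (c1 j != 0%R)) : nat) =
              \sum_(j < size g | j != Ordinal Hi) (((nat_of_ord j != k) && (c j != 0%R)) : nat).
      apply: eq_bigr => j Hj.
      have Hji : nat_of_ord j != i by apply: contra Hj => /eqP Hji; apply/eqP/val_inj.
      by rewrite /c1 (negbTE Hji).
    by rewrite E c1i Hr0 eqxx andbF Hik Hci add0n add1n ltnSn.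
  have Hk1 : (k < size g1)%N by rewrite sz1.
  have Hd1 : size (c1 k) = d by rewrite c1k.
  have Hck1 : c1 k != 0 by rewrite c1k.
  have [g' [s' [H1 H2]]] := IHN _ Hlt g1 s c1 k Hd1 (erefl _) Hs Hf1 Hr1 Hk1 Hck1.
  by exists g', s'; rewrite -sz1.
have Hlt : (size r < d)%N by rewrite -Hd.
have Hi1 : (i < size g1)%N by rewrite sz1.
have Hd1 : size (c1 i) = size r by rewrite c1i.
have Hci1 : c1 i != 0 by rewrite c1i.
have [g' [s' [H1 H2]]] := IHd _ Hlt (nzc g1 c1 i) g1 s c1 i Hd1 (erefl _) Hs Hf1 Hr1 Hi1 Hci1.
by exists g', s'; rewrite -sz1.
Qed.

Lemma loop n : forall g s, (size g <= n)%N -> stab s -> Full g s ->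
  exists e s', stab s' /\ Full e s' /\ Indep e s'.
Proof.
elim: n => [|n IH] g s Hsz Hs Hf.
  exists g, s; split => //; split => // c _ i Hi.
  by move: (leq_trans Hi Hsz).
case: (classic (exists (c : nat -> {poly K}) i, Rel g s c /\ (i < size g)%N /\ c i != 0))
  => [[c [i [Hr [Hi Hci]]]]|Hno].
  have [g' [s' [Hsz' [Hs' Hf']]]] :=
    step (erefl (size (c i))) (erefl (nzc g c i)) Hs Hf Hr Hi Hci.
  by apply: (IH g' s') => //; rewrite -ltnS (leq_trans Hsz' Hsz).
exists g, s; split => //; split => // c Hr i Hi.
case: (eqVneq (c i) 0) => // Hne; exfalso; apply: Hno; by exists c, i.
Qed.

Lemma generic_main : fin_gen f ->
  (exists s, forall m, tors_part f m <-> kspan s m) /\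
  free_fin_rank_quot f (tors_part f).
Proof.
move=> [g0 Hg0].
have Hs0 : stab [::] by move=> m /kspan_nil ->; rewrite f0; exact: kspan0.
have Hf0 : Full g0 [::].
  move=> m; have [d [c ->]] := Hg0 m.
  apply: (gen_sum (F := fun i => skew_act f (c i) d g0`_i)) => i Hi.
  by rewrite -act_poly; apply: gen_act; apply: gen_g; apply: mem_nth.
have [e [s [Hs [Hf Hi]]]] := loop (leqnn (size g0)) Hs0 Hf0.
have Heq : forall m, tors_part f m <-> kspan s m.
  move=> m; split.
  - move=> [n [Ns [xs [H ->]]]].
    apply: (kspan_sum (F := xs)) => i Hi'.
    have [[N0 Nadd Nsc Nf [t Ht]] Nx] := H i Hi'.
    have Hit : forall j, kspan t (iter j f (xs i)).
      move=> j; apply/Ht; elim: j => //= j IHj; exact: Nf.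
    have [A [HA [HsA Hsum]]] := kspan_dep Hit.
    apply: (tors_in Hs Hf Hi HA).
    by rewrite (act_widen (n:=(size t).+1)) // Hsum; exact: kspan0.
  - move=> Hm; exists 1%N, (fun _ => kspan s), (fun _ => m); split; last by rewrite big_ord1.
    move=> i _; split => //; split.
    + exact: kspan0.
    + exact: kspanD.
    + exact: kspanZ.
    + exact: Hs.
    + by exists s.
split; first by exists s.
exists e; split.
- move=> m; have [c Hc] := gen_poly Hs (Hf m).
  exists (\sum_(i < size e) size (c i))%N, (fun i j => (c i)`_j).
  apply/Heq.
  suff -> : \sum_(i < size e) skew_act f (fun j => (c i)`_j)
              (\sum_(i < size e) size (c i))%N e`_i = \sum_(i < size e) act (c i) e`_i by [].
  apply: eq_bigr => i _; rewrite /skew_act (act_widen (n := (\sum_(i < size e) size (c i))%N)) //.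
  by rewrite (bigD1 i) //= leq_addr.
- move=> d c Hm i j Hie Hj.
  have HR : Rel e s (fun i => \poly_(j < d) c i j).
    rewrite /Rel; under eq_bigr => k _ do rewrite act_poly.
    exact/Heq.
  have := Hi _ HR i Hie => /(congr1 (fun p : {poly K} => p`_j)).
  by rewrite coef_poly Hj coef0.
Qed.

End Gen.

Section Image.
Variables (K : fieldType) (M : lmodType K) (f h : M -> M) (phi psi : K -> K).
Hypothesis h_add : forall x y, h (x + y) = h x + h y.
Hypothesis h_semi : forall a x, h (a *: x) = phi a *: h x.
Hypothesis h_pull : forall b x, h (psi b *: x) = b *: h x.
Hypothesis h_comm : forall x, h (f x) = f (h x).

Lemma h0 : h 0 = 0.
Proof.
have H := h_add 0 0; rewrite addr0 in H.
by apply: (@addrI _ (h 0)); rewrite addr0 -H.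
Qed.

Lemma h_sum n (F : 'I_n -> M) : h (\sum_(i < n) F i) = \sum_(i < n) h (F i).
Proof. exact: (big_morph h h_add h0). Qed.

Lemma fd_image (N : M -> Prop) : fd_stable f N ->
  fd_stable f (fun y => exists x, N x /\ y = h x).
Proof.
move=> [N0 Nadd Nsc Nf [t Ht]]; split.
- by exists 0; rewrite h0.
- by move=> _ _ [x [Hx ->]] [y [Hy ->]]; exists (x + y); rewrite h_add; split => //; apply: Nadd.
- by move=> a _ [x [Hx ->]]; exists (psi a *: x); rewrite h_pull; split => //; apply: Nsc.
- by move=> _ [x [Hx ->]]; exists (f x); rewrite h_comm; split => //; apply: Nf.
- exists (map h t) => y; split.
  + move=> [x [/Ht [c ->] ->]]; exists (fun i => phi (c i)).
    rewrite h_sum size_map; apply: eq_bigr => i _.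
    by rewrite h_semi (nth_map 0) // h0.
  + move=> [c ->]; exists (\sum_(i < size t) psi (c i) *: t`_i); split.
      by apply/Ht; exists (fun i => psi (c i)).
    rewrite h_sum size_map; apply: eq_bigr => i _.
    by rewrite h_pull (nth_map 0).
Qed.

Lemma tors_image m : tors_part f m -> tors_part f (h m).
Proof.
move=> [n [Ns [xs [H ->]]]].
exists n, (fun i y => exists x, Ns i x /\ y = h x), (fun i => h (xs i)); split.
  move=> i Hi; have [H1 H2] := H i Hi; split; first exact: fd_image.
  by exists (xs i).
by rewrite h_sum.
Qed.

End Image.

Lemma free_ext (K : fieldType) (M : lmodType K) (f : M -> M) (P Q : M -> Prop) :
  (forall m, P m <-> Q m) -> free_fin_rank_quot f P -> free_fin_rank_quot f Q.
Proof.
move=> E [e [H1 H2]]; exists e; split.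
  by move=> m; have [d [c Hc]] := H1 m; exists d, c; apply/E.
by move=> d c Hc; apply: H2; apply/E.
Qed.

Lemma tors_of_fd (K : fieldType) (M : lmodType K) (f : M -> M) (N : M -> Prop) m :
  fd_stable f N -> N m -> tors_part f m.
Proof.
move=> HN Hm; exists 1%N, (fun _ => N), (fun _ => m); split; last by rewrite big_ord1.
by move=> i _; split.
Qed.

Lemma kspan_fd (K : fieldType) (M : lmodType K) (f : M -> M) s :
  (forall m, kspan s m -> kspan s (f m)) -> fd_stable f (kspan s).
Proof.
move=> Hs; split; [exact: kspan0|exact: kspanD|exact: kspanZ|exact: Hs|by exists s].
Qed.

Lemma qpow_inj (K : fieldType) p n (x y : K) : p \in [pchar K] ->
  x ^+ (p ^ n) = y ^+ (p ^ n) -> x = y.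
Proof.
move=> pch; elim: n x y => [|n IH] x y; first by rewrite !expr1.
rewrite expnS !exprM => /IH.
rewrite -!(pFrobenius_autE pch); exact: fmorph_inj.
Qed.

Theorem proposition4
  (F : finFieldType) (K : closedFieldType)
  (iota : {rmorphism {fraction {poly F}} -> K})
  (Kalg : forall x : K, exists2 p : {poly {fraction {poly F}}},
            p != 0 & root (map_poly iota p) x)
  (M : lmodType K) (sM tM : M -> M)
  (s_add : forall x y : M, sM (x + y) = sM x + sM y)
  (s_semi : forall (a : K) (m : M), sM ((a ^+ #|F|) *: m) = a *: sM m)
  (t_add : forall x y : M, tM (x + y) = tM x + tM y)
  (t_lin : forall (a : K) (m : M), tM (a *: m) = a *: tM m)
  (st_comm : forall m : M, sM (tM m) = tM (sM m))
  (fg_s : fin_gen sM) (fg_t : fin_gen tM) :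
  (forall m : M, tors_part sM m <-> tors_part tM m) /\
  (exists s : seq M, forall m : M, tors_part sM m <-> kspan s m) /\
  free_fin_rank_quot sM (tors_part sM) /\
  free_fin_rank_quot tM (tors_part sM).
Proof.
set q := #|F|.
have q_gt0 : (0 < q)%N by rewrite /q (leq_trans _ (finNzRing_gt1 F)).
have [p pr pchF] := finPcharP F.
have qE : q = (p ^ logn p q)%N by exact: (card_pprimeChar pchF).
have pchK : p \in [pchar K].
  apply/andP; split => //.
  have -> : (p%:R : K) = iota (tofrac ((p%:R : F)%:P)).
    by rewrite polyC_natr rmorph_nat rmorph_nat.
  by rewrite (pcharf0 pchF) polyC0 tofrac0 rmorph0.
have qinj : forall x y : K, x ^+ q = y ^+ q -> x = y.
  by move=> x y; rewrite qE; apply: qpow_inj.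
have root : forall b : K, exists a : K, a ^+ q == b.
  move=> b; have [x Hx] := @solve_monicpoly K q (fun i => if i == 0%N then b else 0) q_gt0.
  exists x; apply/eqP; rewrite Hx (bigD1 (Ordinal q_gt0)) //= mulr1 big1 ?addr0 //.
  move=> i Hi; have -> : (nat_of_ord i == 0%N) = false.
    by apply/negbTE; apply: contra Hi => /eqP Hi0; apply/eqP/val_inj.
  by rewrite mul0r.
pose th b := xchoose (root b).
have thE : forall b, th b ^+ q = b by move=> b; apply/eqP; exact: (xchooseP (root b)).
have semi_s : forall a m, sM (a *: m) = th a *: sM m.
  by move=> a m; rewrite -{1}(thE a) s_semi.
have th0 : th 0 = 0 by apply: qinj; rewrite thE expr0n eqn0Ngt q_gt0.
have thnz : forall a, th a = 0 -> a = 0.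
  by move=> a H; rewrite -(thE a) H expr0n eqn0Ngt q_gt0.
have thsurj : forall y, exists x, th x = y.
  by move=> y; exists (y ^+ q); apply: qinj; rewrite thE.
have [[ss Hss] Fs] := generic_main s_add semi_s th0 thnz thsurj fg_s.
have [[st Hst] Ft] := generic_main (th := id) t_add t_lin (erefl _) (fun a H => H)
  (fun y => ex_intro _ y (erefl _)) fg_t.
have E : forall m, tors_part sM m <-> tors_part tM m.
  move=> m; split.
  - move=> /Hss Hm; apply: (tors_of_fd (N := kspan ss)) => //.
    apply: kspan_fd => x /Hss Hx; apply/Hss.
    exact: (tors_image (f:=sM) (h:=tM) (phi:=id) (psi:=id) t_add t_lin t_lin
      (fun x => esym (st_comm x))).
  - move=> /Hst Hm; apply: (tors_of_fd (N := kspan st)) => //.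
    apply: kspan_fd => x /Hst Hx; apply/Hst.
    exact: (tors_image (f:=tM) (h:=sM) (phi:=th) (psi:=fun b => b ^+ q) s_add semi_s s_semi
      st_comm).
split => //; split; first by exists ss.
split => //.
apply: (free_ext (P := tors_part tM)) => // m; apply: iff_sym; exact: E.
Qed.
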